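(* Let $L^\bullet$ be a generalized operator algebra with the Fredholm property, and assume: (a) whenever $A=A^*\in L^0((g,g))$ is a Fredholm operator on $H(g)$, the orthogonal projection onto $\ker A$ belongs to $L^{-\infty}((g,g))$; (b) $R_1TR_0\in L^{-\infty}((g,g))$ whenever $R_0,R_1\in L^{-\infty}((g,g))$ and $T\in\mathcal L(H(g))$. Then $L^\bullet$ has the extended Fredholm property.
   Context: Generalized operator algebra $L^\bullet$: a set $G$ of weights; to each $g\in G$ a Hilbert space $H(g)$ (some weight has $H(g)=\{0\}$); for each pair $\mathfrak g=(g^0,g^1)$ vector spaces $L^{-\infty}(\mathfrak g)\subset L^0(\mathfrak g)\subset\mathcal L(H(g^0),H(g^1))$ such that elements of $L^{-\infty}(\mathfrak g)$ (smoothing operators) are compact, the identity lies in $L^0((g,g))$, composition maps $L^\mu((g^1,g^2))\times L^\nu((g^0,g^1))\to L^{\mu+\nu}((g^0,g^2))$ for $\mu,\nu\in\{0,-\infty\}$, and the Hilbert space adjoint of $A\in L^\mu((g^0,g^1))$ lies in $L^\mu((g^1,g^0))$. A parametrix of $A\in L^0((g^0,g^1))$ is $B\in L^0((g^1,g^0))$ with $AB-1$, $BA-1$ smoothing. Fredholm property: every $A\in L^0((g^0,g^1))$ has a parametrix iff it is Fredholm. Extended Fredholm property: the Fredholm property holds and every selfadjoint $A\in L^0((g,g))$ that is Fredholm on $H(g)$ has a parametrix $B\in L^0((g,g))$ with $AB=BA=1-\pi$, $\pi$ the orthogonal projection onto $\ker A$. *)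

(* Defs.v *)
From HB Require Import structures.
From mathcomp Require Import all_boot all_order all_algebra.
From mathcomp Require Import reals.
From mathcomp Require Import complex.
Set Implicit Arguments. Unset Strict Implicit. Unset Printing Implicit Defensive.
Import Order.TTheory GRing.Theory Num.Theory ComplexField.
Local Open Scope ring_scope.

Section Hilbert.
Variable R : realType.

Definition inorm (V : lmodType R[i]) (ip : V -> V -> R[i]) (x : V) : R :=
  Num.sqrt (complex.Re (ip x x)).

Definition ip_cauchy (V : lmodType R[i]) (ip : V -> V -> R[i]) (u : nat -> V) :=
  forall e : R, 0 < e -> exists N : nat, forall m n : nat, (N <= m)%N -> (N <= n)%N ->
    inorm ip (u m - u n) < e.

Definition ip_converges (V : lmodType R[i]) (ip : V -> V -> R[i]) (u : nat -> V) (l : V) :=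
  forall e : R, 0 < e -> exists N : nat, forall n : nat, (N <= n)%N -> inorm ip (u n - l) < e.

Record hilbert := Hilbert {
  hcar :> lmodType R[i];
  hinner : hcar -> hcar -> R[i];
  hinner_linl : forall (a : R[i]) (x y z : hcar),
      hinner (a *: x + y) z = a * hinner x z + hinner y z;
  hinner_conj : forall x y : hcar, hinner y x = (hinner x y)^*;
  hinner_ge0 : forall x : hcar, 0 <= hinner x x;
  hinner_eq0 : forall x : hcar, hinner x x = 0 -> x = 0;
  hcomplete : forall u : nat -> hcar, ip_cauchy hinner u ->
      exists l : hcar, ip_converges hinner u l
}.

Definition hnorm (H : hilbert) (x : H) : R := inorm (@hinner H) x.

Definition bounded_op (H0 H1 : hilbert) (A : H0 -> H1) : Prop :=
  (forall (a : R[i]) (x y : H0), A (a *: x + y) = a *: A x + A y) /\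
  exists M : R, forall x : H0, hnorm (A x) <= M * hnorm x.

Definition compact_op (H0 H1 : hilbert) (A : H0 -> H1) : Prop :=
  bounded_op A /\
  forall u : nat -> H0, (exists M : R, forall n, hnorm (u n) <= M) ->
    exists (phi : nat -> nat) (l : H1),
      (forall n, (phi n < phi n.+1)%N) /\ ip_converges (@hinner H1) (fun n => A (u (phi n))) l.

Definition is_adjoint (H0 H1 : hilbert) (A : H0 -> H1) (B : H1 -> H0) : Prop :=
  forall (x : H0) (y : H1), hinner (A x) y = hinner x (B y).

Definition fredholm (H0 H1 : hilbert) (A : H0 -> H1) : Prop :=
  bounded_op A /\
  (exists (n : nat) (e : 'I_n -> H0), forall x : H0, A x = 0 ->
      exists c : 'I_n -> R[i], x = \sum_(k < n) c k *: e k) /\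
  (exists (n : nat) (e : 'I_n -> H1), forall y : H1,
      exists (x : H0) (c : 'I_n -> R[i]), y = A x + \sum_(k < n) c k *: e k).

Definition orth_proj_ker (H0 H1 : hilbert) (A : H0 -> H1) (P : H0 -> H0) : Prop :=
  forall x : H0, A (P x) = 0 /\ forall z : H0, A z = 0 -> hinner (x - P x) z = 0.

End Hilbert.

(* Generalized operator algebra.  L0 g0 g1 = L^0((g0,g1)), Linf g0 g1 = L^{-oo}((g0,g1)). *)
Record GOA (R : realType) := MkGOA {
  weight : Type;
  Hs : weight -> hilbert R;
  L0 : forall g0 g1 : weight, (Hs g0 -> Hs g1) -> Prop;
  Linf : forall g0 g1 : weight, (Hs g0 -> Hs g1) -> Prop;
  trivial_weight : exists g : weight, forall x : Hs g, x = 0;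
  L0_zero : forall g0 g1, L0 (fun _ : Hs g0 => (0 : Hs g1));
  L0_lin : forall g0 g1 (a : R[i]) (A B : Hs g0 -> Hs g1),
      L0 A -> L0 B -> L0 (fun x => a *: A x + B x);
  Linf_zero : forall g0 g1, Linf (fun _ : Hs g0 => (0 : Hs g1));
  Linf_lin : forall g0 g1 (a : R[i]) (A B : Hs g0 -> Hs g1),
      Linf A -> Linf B -> Linf (fun x => a *: A x + B x);
  Linf_L0 : forall g0 g1 (A : Hs g0 -> Hs g1), Linf A -> L0 A;
  L0_bounded : forall g0 g1 (A : Hs g0 -> Hs g1), L0 A -> bounded_op A;
  Linf_compact : forall g0 g1 (A : Hs g0 -> Hs g1), Linf A -> compact_op A;
  L0_id : forall g, L0 (fun x : Hs g => x);
  (* composition L^mu x L^nu -> L^(mu+nu) *)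
  comp_00 : forall g0 g1 g2 (A : Hs g1 -> Hs g2) (B : Hs g0 -> Hs g1),
      L0 A -> L0 B -> L0 (fun x => A (B x));
  comp_0inf : forall g0 g1 g2 (A : Hs g1 -> Hs g2) (B : Hs g0 -> Hs g1),
      L0 A -> Linf B -> Linf (fun x => A (B x));
  comp_inf0 : forall g0 g1 g2 (A : Hs g1 -> Hs g2) (B : Hs g0 -> Hs g1),
      Linf A -> L0 B -> Linf (fun x => A (B x));
  comp_infinf : forall g0 g1 g2 (A : Hs g1 -> Hs g2) (B : Hs g0 -> Hs g1),
      Linf A -> Linf B -> Linf (fun x => A (B x));
  adj_L0 : forall g0 g1 (A : Hs g0 -> Hs g1), L0 A ->
      exists B : Hs g1 -> Hs g0, L0 B /\ is_adjoint A B;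
  adj_Linf : forall g0 g1 (A : Hs g0 -> Hs g1), Linf A ->
      exists B : Hs g1 -> Hs g0, Linf B /\ is_adjoint A B
}.

Section GOAdefs.
Variables (R : realType) (L : GOA R).

Definition parametrix (g0 g1 : weight L) (A : Hs g0 -> Hs g1) (B : Hs g1 -> Hs g0) : Prop :=
  L0 B /\ Linf (fun y => A (B y) - y) /\ Linf (fun x => B (A x) - x).

Definition fredholm_property : Prop :=
  forall (g0 g1 : weight L) (A : Hs g0 -> Hs g1), L0 A ->
    ((exists B, parametrix A B) <-> fredholm A).

Definition extended_fredholm_property : Prop :=
  fredholm_property /\
  forall (g : weight L) (A : Hs g -> Hs g),
    L0 A -> is_adjoint A A -> fredholm A ->
    exists (B : Hs g -> Hs g) (pi : Hs g -> Hs g),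
      orth_proj_ker A pi /\ L0 B /\
      (forall x, A (B x) = x - pi x) /\ (forall x, B (A x) = x - pi x).

End GOAdefs.

(* Main.v *)
Require Import Defs.
From mathcomp Require Import all_boot all_order all_algebra.
From mathcomp Require Import reals complex.
From mathcomp Require Import ring lra.
From mathcomp Require Import classical_sets.
From Stdlib Require Import IndefiniteDescription FunctionalExtensionality Classical.
Import Order.TTheory GRing.Theory Num.Theory ComplexField.
Local Open Scope ring_scope.
Local Notation "x %:C" := (real_complex _ x) (format "x %:C").


Section Hil.
Variable R : realType.
Variable H : hilbert R.
Local Notation ip := (@hinner R H).
Local Notation Re := complex.Re.
Local Notation Im := complex.Im.

Lemma conjE (a b : R) : Num.conj (Complex a b) = Complex a (-b).
Proof. reflexivity. Qed.
Lemma cmulE (a b c d : R) : Complex a b * Complex c d = Complex (a*c - b*d) (a*d + b*c).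
Proof. reflexivity. Qed.
Lemma caddE (a b c d : R) : Complex a b + Complex c d = Complex (a+c) (b+d).
Proof. reflexivity. Qed.

Lemma ipDl (x y z : H) : ip (x + y) z = ip x z + ip y z.
Proof. by rewrite -[x + y](congr1 (fun t => t + y) (scale1r x)) hinner_linl mul1r. Qed.

Lemma ip0l (z : H) : ip 0 z = 0.
Proof. by apply: (@addrI _ (ip 0 z)); rewrite addr0 -ipDl addr0. Qed.

Lemma ipZl a (x z : H) : ip (a *: x) z = a * ip x z.
Proof. by rewrite -[a *: x]addr0 hinner_linl ip0l addr0. Qed.

Lemma ipNl (x z : H) : ip (- x) z = - ip x z.
Proof. by rewrite -scaleN1r ipZl mulN1r. Qed.

Lemma ipBl (x y z : H) : ip (x - y) z = ip x z - ip y z.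
Proof. by rewrite ipDl ipNl. Qed.

Lemma ipDr (x y z : H) : ip z (x + y) = ip z x + ip z y.
Proof. by rewrite (hinner_conj (x + y) z) (hinner_conj x z) (hinner_conj y z) ipDl rmorphD. Qed.

Lemma ipZr a (x z : H) : ip z (a *: x) = Num.conj a * ip z x.
Proof. by rewrite (hinner_conj (a *: x) z) (hinner_conj x z) ipZl rmorphM. Qed.

Lemma ip0r (z : H) : ip z 0 = 0.
Proof. by rewrite (hinner_conj 0 z) ip0l rmorph0. Qed.

Lemma ipNr (x z : H) : ip z (- x) = - ip z x.
Proof. by rewrite (hinner_conj (- x) z) (hinner_conj x z) ipNl rmorphN. Qed.

Lemma ipBr (x y z : H) : ip z (x - y) = ip z x - ip z y.
Proof. by rewrite ipDr ipNr. Qed.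

Definition n2 (x : H) : R := Re (ip x x).

Lemma ip_n2 (x : H) : ip x x = (n2 x)%:C.
Proof.
have := hinner_ge0 x; rewrite /n2; case: (ip x x) => a b.
by rewrite lecE /= => /andP[/eqP -> _].
Qed.

Lemma n2_ge0 (x : H) : 0 <= n2 x.
Proof. by have := hinner_ge0 x; rewrite lecE /n2 => /andP[_]. Qed.

Lemma n2_eq0 (x : H) : n2 x = 0 -> x = 0.
Proof. by move=> h; apply: hinner_eq0; rewrite ip_n2 h. Qed.

Lemma n20 : n2 0 = 0.
Proof. by rewrite /n2 ip0l. Qed.

Lemma ReipC (x y : H) : Re (ip y x) = Re (ip x y).
Proof. by rewrite hinner_conj; case: (ip x y). Qed.

Lemma n2D (x y : H) : n2 (x + y) = n2 x + n2 y + 2 * Re (ip x y).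
Proof.
rewrite /n2 ipDl !ipDr (hinner_conj x y).
case: (ip x x) => ??; case: (ip y y) => ??; case: (ip x y) => ??; rewrite /=.
ring.
Qed.

Lemma n2N (x : H) : n2 (- x) = n2 x.
Proof. by rewrite /n2 ipNl ipNr opprK. Qed.

Lemma n2B (x y : H) : n2 (x - y) = n2 x + n2 y - 2 * Re (ip x y).
Proof. by rewrite n2D n2N ipNr; case: (ip x y) => ??; rewrite /=; ring. Qed.

Lemma ReZl (r : R) (x y : H) : Re (ip (r%:C *: x) y) = r * Re (ip x y).
Proof. by rewrite ipZl; case: (ip x y) => ??; rewrite /=; ring. Qed.

Lemma ReZr (r : R) (x y : H) : Re (ip x (r%:C *: y)) = r * Re (ip x y).
Proof. by rewrite ReipC ReZl ReipC. Qed.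

Lemma n2Z (a : R[i]) (x : H) : n2 (a *: x) = (Re a ^+ 2 + Im a ^+ 2) * n2 x.
Proof.
rewrite /n2 ipZl ipZr ip_n2; case: a => ??; rewrite /=; ring.
Qed.

Lemma n2Zr (r : R) (x : H) : n2 (r%:C *: x) = r ^+ 2 * n2 x.
Proof. by rewrite n2Z /=; ring. Qed.

Lemma CS (x y : H) : Re (ip x y) ^+ 2 <= n2 x * n2 y.
Proof.
have [y0|yn0] := eqVneq (n2 y) 0.
  by rewrite y0 (n2_eq0 y y0) ip0r /= mulr0 expr2 mulr0.
have py : 0 < n2 y by rewrite lt_def yn0 n2_ge0.
set r := Re (ip x y).
set t := r / n2 y.
have h := n2_ge0 (x - t%:C *: y).
rewrite n2B n2Zr ReZr in h.
have tp : t * n2 y = r by rewrite /t mulfVK.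
have hx := n2_ge0 x.
nra.
Qed.

Definition N (x : H) : R := hnorm x.

Lemma NE (x : H) : N x = Num.sqrt (n2 x).
Proof. by []. Qed.

Lemma N_ge0 (x : H) : 0 <= N x.
Proof. exact: sqrtr_ge0. Qed.

Lemma N_sq (x : H) : N x ^+ 2 = n2 x.
Proof. by rewrite NE sqr_sqrtr // n2_ge0. Qed.

Lemma N_eq0 (x : H) : N x = 0 -> x = 0.
Proof. by move=> h; apply: n2_eq0; rewrite -N_sq h expr2 mulr0. Qed.

Lemma N0 : N 0 = 0.
Proof. by rewrite NE n20 sqrtr0. Qed.

Lemma NN (x : H) : N (- x) = N x.
Proof. by rewrite !NE n2N. Qed.

Lemma NB (x y : H) : N (x - y) = N (y - x).
Proof. by rewrite -NN opprB. Qed.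

Lemma NZr (r : R) (x : H) : N (r%:C *: x) = `|r| * N x.
Proof. by rewrite !NE n2Zr sqrtrM ?sqr_ge0 // sqrtr_sqr. Qed.

Lemma ReipN (x y : H) : Re (ip x y) <= N x * N y.
Proof.
have := CS x y; rewrite -!N_sq -exprMn.
have := mulr_ge0 (N_ge0 x) (N_ge0 y).
move: (N x * N y) => p; nra.
Qed.

Lemma NtriD (x y : H) : N (x + y) <= N x + N y.
Proof.
have h1 := N_sq (x + y); rewrite n2D -!N_sq in h1.
have h2 := ReipN x y.
have := N_ge0 x; have := N_ge0 y; have := N_ge0 (x + y).
move: (N x) (N y) (N (x + y)) (Re (ip x y)) h1 h2 => a b c r; nra.
Qed.

Lemma NtriB (x y z : H) : N (x - z) <= N (x - y) + N (y - z).
Proof. by rewrite -[x - z](subrKA y) NtriD. Qed.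


Lemma le0_eps (a : R) : (forall e, 0 < e -> a < e) -> a <= 0.
Proof. move=> h; rewrite leNgt; apply/negP => a0; have := h a a0; by rewrite ltxx. Qed.

Lemma arch_inv (e : R) : 0 < e -> exists k : nat, forall n, (k <= n)%N -> n.+1%:R^-1 < e.
Proof.
move=> e0; have [k hk] := ltr_add_invr e0; rewrite add0r in hk.
exists k => n kn; apply: le_lt_trans hk.
by rewrite lef_pV2 ?ler_nat ?posrE ?ltr0n.
Qed.

Definition conv (u : nat -> H) (l : H) := ip_converges (@hinner R H) u l.
Definition cauchy (u : nat -> H) := ip_cauchy (@hinner R H) u.

Lemma convE u l : conv u l <-> forall e, 0 < e -> exists k, forall n, (k <= n)%N -> N (u n - l) < e.
Proof. by []. Qed.

Lemma conv_unique u l1 l2 : conv u l1 -> conv u l2 -> l1 = l2.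
Proof.
move=> h1 h2; apply/eqP; rewrite -subr_eq0; apply/eqP; apply: N_eq0; apply/eqP; rewrite eq_le N_ge0 andbT.
apply: le0_eps => e e0.
have e2 : 0 < e / 2 by rewrite divr_gt0.
have [k1 hk1] := (convE _ _).1 h1 _ e2; have [k2 hk2] := (convE _ _).1 h2 _ e2.
have := hk1 (maxn k1 k2) (leq_maxl _ _); have := hk2 (maxn k1 k2) (leq_maxr _ _).
have := NtriB l1 (u (maxn k1 k2)) l2; rewrite (NB l1 (u _)).
move: (N (l1 - l2)) (N (u _ - l1)) (N (u _ - l2)) => a b c ? ? ?.
have : e = e / 2 + e / 2 by rewrite -splitr.
lra.
Qed.

Lemma incr_ge (phi : nat -> nat) : (forall n, (phi n < phi n.+1)%N) -> forall n, (n <= phi n)%N.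
Proof.
move=> h; elim=> [//|n ih]; exact: leq_ltn_trans ih (h n).
Qed.

Lemma conv_sub u l (phi : nat -> nat) : (forall n, (phi n < phi n.+1)%N) ->
  conv u l -> conv (fun n => u (phi n)) l.
Proof.
move=> hp h; apply/convE => e e0; have [k hk] := (convE _ _).1 h e e0; exists k => n kn.
apply: hk; exact: leq_trans kn (incr_ge _ hp n).
Qed.

Lemma conv_const (l : H) : conv (fun _ => l) l.
Proof. by apply/convE => e e0; exists 0%N => n _; rewrite subrr N0. Qed.

Lemma conv_N0 u l : (forall e, 0 < e -> exists k, forall n, (k <= n)%N -> N (u n - l) <= e) -> conv u l.
Proof.
move=> h; apply/convE => e e0; have e2 : 0 < e / 2 by rewrite divr_gt0.
have [k hk] := h _ e2; exists k => n kn; apply: le_lt_trans (hk n kn) _.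
have : e = e / 2 + e / 2 by rewrite -splitr.
lra.
Qed.


Lemma paral (a b : H) : n2 (a - b) + n2 (a + b) = 2 * n2 a + 2 * n2 b.
Proof. rewrite n2B n2D; ring. Qed.

Lemma half_eq (x s t : H) :
  (2^-1)%:C *: ((x - s) + (x - t)) = x - (2^-1)%:C *: (s + t).
Proof.
rewrite addrACA -opprD scalerDr scalerN; congr (_ - _).
have h2 : (2^-1 : R) + 2^-1 = 1 by field.
by rewrite scalerDr -scalerDl -rmorphD h2 rmorph1 scale1r.
Qed.

Lemma diff_eq (x s t : H) : (x - s) - (x - t) = t - s.
Proof. by rewrite opprB addrC addrA subrK. Qed.

Lemma proj_thm (S : H -> Prop) :
  S 0 -> (forall a x y, S x -> S y -> S (a *: x + y)) ->
  (forall u l, (forall n, S (u n)) -> conv u l -> S l) ->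
  forall x, exists p, S p /\ forall s, S s -> ip (x - p) s = 0.
Proof.
move=> S0 Slin Scl x.
pose D : set R := fun r : R => exists s, S s /\ r = N (x - s).
have Dn : exists r, D r by exists (N (x - 0)); exists 0.
have Dlb : has_lbound D by exists (0 : R); move=> r [s [_ ->]]; exact: N_ge0.
set d := inf D.
have F1 : forall s, S s -> d <= N (x - s).
  by move=> s Ss; apply: (ge_inf Dlb); exists s.
have d0 : 0 <= d by apply: lb_le_inf Dn _ => r [s [_ ->]]; exact: N_ge0.
have F2 : forall n : nat, exists s, S s /\ N (x - s) < d + n.+1%:R^-1.
  move=> n; have [|r [s [Ss ->]] lt] := inf_lt Dn (x := d + n.+1%:R^-1).
    by rewrite ltrDl invr_gt0 ltr0n.
  by exists s.
pose sq n := proj1_sig (constructive_indefinite_description _ (F2 n)).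
have sqP n : S (sq n) /\ N (x - sq n) < d + n.+1%:R^-1 :=
  proj2_sig (constructive_indefinite_description _ (F2 n)).
have cau : cauchy sq.
  move=> e e0; change (exists k, forall m n, (k <= m)%N -> (k <= n)%N -> N (sq m - sq n) < e).
  pose del := e^+2 / (8 * d + 4 + e^+2).
  have dd : 0 < 8 * d + 4 + e^+2 by have := sqr_ge0 e; lra.
  have del0 : 0 < del by rewrite divr_gt0 // exprn_gt0.
  have dele : del * (8 * d + 4 + e^+2) = e^+2 by rewrite /del mulfVK // gt_eqF.
  have [k hk] := arch_inv del del0.
  exists k => m n km kn.
  have [Sm hm] := sqP m; have [Sn hn] := sqP n.
  have hkm := hk m km; have hkn := hk n kn.
  pose mid := (2^-1)%:C *: (sq n + sq m).
  have Smid : S mid.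
    rewrite /mid -[_ *: _]addr0; apply: (Slin) => //.
    by rewrite -[sq n]scale1r; apply: (Slin).
  have hmid := F1 _ Smid.
  have par := paral (x - sq n) (x - sq m).
  rewrite diff_eq -(@N_sq (sq m - sq n)) -!N_sq in par.
  have : N (x - mid) ^+ 2 = (2^-1) ^+ 2 * N ((x - sq n) + (x - sq m)) ^+ 2.
    by rewrite !N_sq -n2Zr half_eq.
  have hNm := N_ge0 (x - sq m); have hNn := N_ge0 (x - sq n).
  have hNd := N_ge0 (sq m - sq n).
  have hN1 := F1 _ Sm; have hN2 := F1 _ Sn.
  move: par hmid hm hn hkm hkn hNm hNn hNd hN1 hN2.
  move: (N (x - mid)) (N (x - sq n + (x - sq m))) (N (x - sq m)) (N (x - sq n)) (N (sq m - sq n)).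
  move: (m.+1%:R^-1 : R) (n.+1%:R^-1 : R) => im in_ c a am an dmn.
  move=> par hmid hm hn hkm hkn hNm hNn hNd hN1 hN2 hc.
  have ha : a ^+ 2 = 4 * c ^+ 2 by rewrite hc; field.
  have del1 : del <= 1.
    have : del * (8 * d + 4 + e^+2) <= 1 * (8 * d + 4 + e^+2).
      rewrite dele mul1r; have := sqr_ge0 e; lra.
    by rewrite ler_pM2r.
  have hdm : dmn ^+ 2 < e ^+ 2.
    have h4 : dmn ^+ 2 = 2 * am ^+ 2 + 2 * an ^+ 2 - 4 * c ^+ 2 by lra.
    have h5 : am ^+ 2 <= (d + del) ^+ 2 by nra.
    have h6 : an ^+ 2 <= (d + del) ^+ 2 by nra.
    have h7 : d ^+ 2 <= c ^+ 2 by nra.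
    have h8 : 0 < del * e ^+ 2 by rewrite mulr_gt0 // exprn_gt0.
    nra.
  nra.
have [p hp] := @hcomplete _ H sq cau.
have Sp : S p := Scl sq p (fun n => (sqP n).1) hp.
have Np : N (x - p) <= d.
  rewrite -subr_le0; apply: le0_eps => e e0.
  have e2 : 0 < e / 2 by rewrite divr_gt0.
  have [k1 hk1] := arch_inv _ e2; have [k2 hk2] := (convE _ _).1 hp _ e2.
  pose n := maxn k1 k2.
  have h1 := hk1 n (leq_maxl _ _); have h2 := hk2 n (leq_maxr _ _).
  have h3 := NtriB x (sq n) p; have h4 := (sqP n).2.
  have : e = e / 2 + e / 2 by rewrite -splitr.
  move=> ee; move: h1 h2 h3 h4 ee; move: (N (x - p)) (N (x - sq n)) (N (sq n - p)) (n.+1%:R^-1) => A B C D0; lra.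
exists p; split => // s Ss.
set w := x - p; set a := ip w s.
have key : forall t, N (x - p) ^+ 2 <= n2 (w - t *: s).
  move=> t; have St : S (t *: s + p) by apply: (Slin).
  have := F1 _ St; rewrite opprD addrA addrAC -/w => h.
  rewrite -N_sq; have := N_ge0 w; have := N_ge0 (w - t *: s); move: Np h d0; rewrite -/w; move: (N w) (N (w - t *: s)) => A B; nra.
pose r := (n2 s + 1)^-1.
have hs := n2_ge0 s.
have r0 : 0 < r by rewrite invr_gt0; lra.
have rr : r * (n2 s + 1) = 1 by rewrite mulVf //; apply/eqP; lra.
have := key ((r%:C) * a).
rewrite n2B n2Z ipZr -/a -N_sq.
move: a => [a1 a2]; rewrite /= => h.
rewrite -/w in h.
have h' : 0 <= r * ((a1 ^+ 2 + a2 ^+ 2) * (r * n2 s) - 2 * (a1 ^+ 2 + a2 ^+ 2)).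
  move: h; move: (N w) => A; move=> h; nra.
rewrite pmulr_rge0 // in h'.
have hq : a1 ^+ 2 + a2 ^+ 2 = 0.
  have hrs : r * n2 s = 1 - r by lra.
  rewrite hrs in h'.
  have := sqr_ge0 a1; have := sqr_ge0 a2; move: (a1 ^+ 2) (a2 ^+ 2) h' => u v h1 h2 h3; nra.
have ha1 : a1 = 0 by have := sqr_ge0 a1; have := sqr_ge0 a2; nra.
have ha2 : a2 = 0 by have := sqr_ge0 a1; have := sqr_ge0 a2; nra.
by rewrite ha1 ha2.
Qed.

Section Op.
Variable T : H -> H.
Hypothesis hT : bounded_op T.

Lemma TL a x y : T (a *: x + y) = a *: T x + T y.
Proof. by case: hT => h _; apply: h. Qed.

Lemma T0 : T 0 = 0.
Proof.
have := TL 1 0 0; rewrite !scale1r addr0 => h.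
by apply: (@addrI _ (T 0)); rewrite addr0 -h.
Qed.

Lemma TD x y : T (x + y) = T x + T y.
Proof. by rewrite -[x in LHS]scale1r TL scale1r. Qed.

Lemma TZ a x : T (a *: x) = a *: T x.
Proof. by rewrite -[a *: x]addr0 TL T0 addr0. Qed.

Lemma TN x : T (- x) = - T x.
Proof. by rewrite -scaleN1r TZ scaleN1r. Qed.

Lemma TB x y : T (x - y) = T x - T y.
Proof. by rewrite TD TN. Qed.

Lemma Tbnd : exists M, 0 < M /\ forall x, N (T x) <= M * N x.
Proof.
case: hT => _ [M hM]; exists (`|M| + 1); split; first by have := normr_ge0 M; lra.
have hM' : forall x, N (T x) <= M * N x := hM.
move=> x; apply: le_trans (hM' x) _; have := N_ge0 x; have := ler_norm M.
move: (N x) => a; nra.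
Qed.

Lemma conv_op u l : conv u l -> conv (fun n => T (u n)) (T l).
Proof.
move=> h; apply/convE => e e0; have [M [M0 hM]] := Tbnd.
have eM : 0 < e / M by rewrite divr_gt0.
have [k hk] := (convE _ _).1 h _ eM; exists k => n kn.
rewrite -TB; apply: le_lt_trans (hM _) _.
by rewrite -ltr_pdivlMl // mulrC hk.
Qed.

End Op.

Lemma conv_add u v l m : conv u l -> conv v m -> conv (fun n => u n + v n) (l + m).
Proof.
move=> h1 h2; apply/convE => e e0; have e2 : 0 < e / 2 by rewrite divr_gt0.
have [k1 hk1] := (convE _ _).1 h1 _ e2; have [k2 hk2] := (convE _ _).1 h2 _ e2.
exists (maxn k1 k2) => n kn.
have h3 := hk1 n (leq_trans (leq_maxl _ _) kn); have h4 := hk2 n (leq_trans (leq_maxr _ _) kn).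
have : u n + v n - (l + m) = (u n - l) + (v n - m) by rewrite opprD addrACA.
move=> ->; have h5 := NtriD (u n - l) (v n - m).
have : e = e / 2 + e / 2 by rewrite -splitr.
move: h3 h4 h5; move: (N (u n - l)) (N (v n - m)) (N (u n - l + (v n - m))) => a b c; lra.
Qed.

Lemma conv_opp u l : conv u l -> conv (fun n => - u n) (- l).
Proof.
move=> h; apply/convE => e e0; have [k hk] := (convE _ _).1 h _ e0; exists k => n kn.
by rewrite -opprD NN hk.
Qed.

Lemma conv_zero u : (forall e, 0 < e -> exists k, forall n, (k <= n)%N -> N (u n) < e) -> conv u 0.
Proof. by move=> h; apply/convE => e e0; have [k hk] := h e e0; exists k => n kn; rewrite subr0 hk. Qed.

Lemma zid (V : zmodType) (D Q G : V) : Q - D + (D - (Q - G)) = G.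
Proof. by rewrite addrA subrK opprB addrC subrK. Qed.

Lemma core (L0' Linf' : (H -> H) -> Prop)
  (Linf_L0' : forall A, Linf' A -> L0' A)
  (L0_bnd : forall A, L0' A -> bounded_op A)
  (Linf_cpt : forall A, Linf' A -> compact_op A)
  (L0lin : forall a A B, L0' A -> L0' B -> L0' (fun x => a *: A x + B x))
  (Linflin : forall a A B, Linf' A -> Linf' B -> Linf' (fun x => a *: A x + B x))
  (c0inf : forall A B, L0' A -> Linf' B -> Linf' (fun x => A (B x)))
  (cinf0 : forall A B, Linf' A -> L0' B -> Linf' (fun x => A (B x)))
  (hb : forall R0 R1 T, Linf' R0 -> Linf' R1 -> bounded_op T -> Linf' (fun x => R1 (T (R0 x))))
  (A B0 : H -> H) (LA : L0' A) (sa : is_adjoint A A)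
  (par : L0' B0 /\ Linf' (fun y => A (B0 y) - y) /\ Linf' (fun x => B0 (A x) - x))
  (ha : forall pi, orth_proj_ker A pi -> Linf' pi) :
  exists (B : H -> H) (pi : H -> H),
      orth_proj_ker A pi /\ L0' B /\
      (forall x, A (B x) = x - pi x) /\ (forall x, B (A x) = x - pi x).
Proof.
have Ab := L0_bnd _ LA.
have [LB0 [P1 P2]] := par.
have B0b := L0_bnd _ LB0.
have ker_proj : forall x, exists p, A p = 0 /\ forall s, A s = 0 -> ip (x - p) s = 0.
  apply: (proj_thm (fun z => A z = 0)).
  - exact: T0.
  - by move=> a x y hx hy; rewrite TL // hx hy scaler0 addr0.
  - move=> u l hu hc.
    apply: (conv_unique (fun n => A (u n))); first exact: conv_op.
    have -> : (fun n => A (u n)) = (fun _ => 0) by apply: functional_extensionality.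
    exact: conv_const.
pose pi x := proj1_sig (constructive_indefinite_description _ (ker_proj x)).
have piP x : A (pi x) = 0 /\ forall s, A s = 0 -> ip (x - pi x) s = 0 :=
  proj2_sig (constructive_indefinite_description _ (ker_proj x)).
have hpi : orth_proj_ker A pi := piP.
have Lpi := ha pi hpi.
have pib := L0_bnd _ (Linf_L0' _ Lpi).
have ipvv : forall v : H, ip v v = 0 -> v = 0 := @hinner_eq0 _ H.
have pifix : forall z, A z = 0 -> pi z = z.
  move=> z hz; apply/eqP; rewrite eq_sym -subr_eq0; apply/eqP; apply: ipvv.
  by apply: (piP z).2; rewrite TB // hz (piP z).1 subr0.
have piA : forall y, pi (A y) = 0.
  move=> y; apply: ipvv.
  have h1 := (piP (A y)).2 _ (piP (A y)).1.
  rewrite ipBl in h1.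
  have h2 : ip (A y) (pi (A y)) = 0 by rewrite sa (piP (A y)).1 ip0r.
  by rewrite h2 sub0r in h1; apply/eqP; rewrite -oppr_eq0 h1.
have pipi : forall x, pi (pi x) = pi x by move=> x; apply: pifix; exact: (piP x).1.
pose E x := A x + pi x.
have LE : L0' E.
  have h := L0lin 1 _ _ LA (Linf_L0' _ Lpi).
  have -> : E = (fun x => 1 *: A x + pi x) by apply: functional_extensionality => x; rewrite scale1r.
  exact: h.
have Eb := L0_bnd _ LE.
have piE : forall x, pi (E x) = pi x by move=> x; rewrite /E TD // piA pipi add0r.
have Epi : forall x, E (pi x) = pi x by move=> x; rewrite /E (piP x).1 pipi add0r.
have Einj : forall x, E x = 0 -> x = 0.
  move=> x hx; have hAx : A x = - pi x by apply/eqP; rewrite -addr_eq0; apply/eqP; exact: hx.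
  have : ip (A x) (pi x) = 0 by rewrite sa (piP x).1 ip0r.
  rewrite hAx ipNl => /eqP; rewrite oppr_eq0 => /eqP /ipvv h0.
  by rewrite -(pifix x) // hAx h0 oppr0.
have pisa : forall x y, ip (pi x) y = ip x (pi y).
  move=> x y.
  have e1 : ip (pi x) y = ip (pi x) (pi y).
    rewrite -{1}(subrK (pi y) y) ipDr (hinner_conj (y - pi y) (pi x)).
    by rewrite (piP y).2 ?(piP x).1 // rmorph0 add0r.
  have e2 : ip x (pi y) = ip (pi x) (pi y).
    by rewrite -{1}(subrK (pi x) x) ipDl (piP x).2 ?(piP y).1 // add0r.
  by rewrite e1 e2.
have Esa : forall x y, ip (E x) y = ip x (E y).
  by move=> x y; rewrite /E ipDl ipDr sa pisa.
pose K1 x := B0 (E x) - x.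
pose K2 y := E (B0 y) - y.
have LK1 : Linf' K1.
  have h := Linflin 1 _ _ P2 (c0inf _ _ LB0 Lpi).
  have -> : K1 = (fun x => 1 *: (B0 (A x) - x) + B0 (pi x)).
    apply: functional_extensionality => x.
    by rewrite scale1r /K1 /E TD // addrAC.
  exact: h.
have LK2 : Linf' K2.
  have h := Linflin 1 _ _ P1 (cinf0 _ _ Lpi LB0).
  have -> : K2 = (fun y => 1 *: (A (B0 y) - y) + pi (B0 y)).
    apply: functional_extensionality => y.
    by rewrite scale1r /K2 /E addrAC.
  exact: h.
have bb : exists c, 0 < c /\ forall x, c * N x <= N (E x).
  apply: NNPP => hn.
  have hseq : forall n : nat, exists x, N x = 1 /\ N (E x) < n.+1%:R^-1.
    move=> n; apply: NNPP => hx; apply: hn.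
    exists n.+1%:R^-1; split; first by rewrite invr_gt0 ltr0n.
    move=> x; have [->|xn0] := eqVneq x 0; first by rewrite N0 mulr0 N_ge0.
    have Nx0 : 0 < N x.
      rewrite lt_def N_ge0 andbT; apply/eqP => h; move: xn0; by rewrite (N_eq0 x h) eqxx.
    pose y := ((N x)^-1)%:C *: x.
    have Ny : N y = 1 by rewrite NZr ger0_norm ?invr_ge0 ?N_ge0 // mulVf // gt_eqF.
    have NEy : N (E y) = (N x)^-1 * N (E x).
      by rewrite /y TZ // NZr ger0_norm // invr_ge0 N_ge0.
    have : ~ (N (E y) < n.+1%:R^-1) by move=> h; apply: hx; exists y.
    rewrite NEy => /negP; rewrite -leNgt => h.
    apply: le_trans (ler_wpM2r (ltW Nx0) h) _.
    by rewrite mulrAC mulVf ?mul1r // gt_eqF.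
  pose xs n := proj1_sig (constructive_indefinite_description _ (hseq n)).
  have xsP n : N (xs n) = 1 /\ N (E (xs n)) < n.+1%:R^-1 :=
    proj2_sig (constructive_indefinite_description _ (hseq n)).
  have [_ cpt] := Linf_cpt _ LK1.
  have [phi [l [hphi hl]]] : exists (phi : nat -> nat) (l : H),
      (forall n, (phi n < phi n.+1)%N) /\ conv (fun n => K1 (xs (phi n))) l.
    apply: cpt; exists 1 => n; change (N (xs n) <= 1); by rewrite (xsP n).1.
  have [M [M0 hM]] := Tbnd B0 B0b.
  have c1 : conv (fun n => B0 (E (xs n))) 0.
    apply: conv_zero => e e0; have eM : 0 < e / M by rewrite divr_gt0.
    have [k hk] := arch_inv _ eM; exists k => n kn.
    apply: le_lt_trans (hM _) _.
    have hMe : M * (e / M) = e by rewrite mulrC mulfVK // gt_eqF.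
    have := (xsP n).2; have := hk n kn; have := N_ge0 (E (xs n)).
    move: hMe M0; move: (N (E (xs n))) (n.+1%:R^-1) (e / M) => a b f; nra.
  have c2 : conv (fun n => xs (phi n)) (- l).
    have h := conv_add _ _ _ _ (conv_sub _ _ phi hphi c1) (conv_opp _ _ hl).
    rewrite add0r in h.
    have -> : (fun n => xs (phi n)) = (fun n => B0 (E (xs (phi n))) + - K1 (xs (phi n))).
      by apply: functional_extensionality => n; rewrite /K1 opprB addrC subrK.
    exact: h.
  have c3 : conv (fun n => E (xs (phi n))) 0.
    apply: (conv_sub (fun n => E (xs n))) => //.
    apply: conv_zero => e e0; have [k hk] := arch_inv _ e0; exists k => n kn.
    exact: lt_trans (xsP n).2 (hk n kn).
  have El : E (- l) = 0 := conv_unique _ _ _ (conv_op E Eb _ _ c2) c3.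
  have l0 : - l = 0 := Einj _ El.
  rewrite l0 in c2.
  have [k hk] := (convE _ _).1 c2 1 ltr01.
  by have := hk k (leqnn k); rewrite subr0 (xsP (phi k)).1 ltxx.
have [c [c0 hc]] := bb.
have Rp : forall y, exists p, (exists x, E x = p) /\
    forall s, (exists x, E x = s) -> ip (y - p) s = 0.
  apply: proj_thm.
  - by exists 0; rewrite T0.
  - move=> a _ _ [x1 <-] [x2 <-]; exists (a *: x1 + x2); exact: TL.
  - move=> u l hu hcv.
    pose xs n := proj1_sig (constructive_indefinite_description _ (hu n)).
    have xsP n : E (xs n) = u n :=
      proj2_sig (constructive_indefinite_description _ (hu n)).
    have cau : cauchy xs.
      move=> e e0.
      change (exists k, forall m n, (k <= m)%N -> (k <= n)%N -> N (xs m - xs n) < e).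
      have ec : 0 < e * c / 2 by rewrite divr_gt0 // mulr_gt0.
      have [k hk] := (convE _ _).1 hcv _ ec; exists k => m n km kn.
      have h1 := hc (xs m - xs n); rewrite TB // !xsP in h1.
      have h2 := NtriB (u m) l (u n); rewrite (NB l (u n)) in h2.
      have h3 := hk m km; have h4 := hk n kn.
      have h5 : e * c / 2 + e * c / 2 = e * c by rewrite -splitr.
      move: h1 h2 h3 h4 h5 c0 (N_ge0 (xs m - xs n)).
      move: (N (xs m - xs n)) (N (u m - u n)) (N (u m - l)) (N (u n - l)) (e * c / 2) => a b b1 b2 f.
      nra.
    have [x hx] := @hcomplete _ H xs cau.
    exists x; apply: (conv_unique (fun n => E (xs n))); first exact: conv_op.
    have -> : (fun n => E (xs n)) = u by apply: functional_extensionality.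
    exact: hcv.
have Eonto : forall y, exists x, E x = y.
  move=> y; have [p [[x hx] hor]] := Rp y.
  exists x; rewrite hx; apply/eqP; rewrite eq_sym -subr_eq0; apply/eqP.
  apply: Einj; apply: ipvv; rewrite Esa; apply: hor; by exists (E (y - p)).
pose G y := proj1_sig (constructive_indefinite_description _ (Eonto y)).
have EG y : E (G y) = y := proj2_sig (constructive_indefinite_description _ (Eonto y)).
have GE : forall x, G (E x) = x.
  move=> x; apply/eqP; rewrite -subr_eq0; apply/eqP; apply: Einj.
  by rewrite (TB E) // EG subrr.
have Glin : forall a x y, G (a *: x + y) = a *: G x + G y.
  move=> a x y; apply/eqP; rewrite -subr_eq0; apply/eqP; apply: Einj.
  by rewrite (TB E) // (TL E) // !EG subrr.
have Gb : bounded_op G.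
  split => //; exists c^-1 => y; change (N (G y) <= c^-1 * N y).
  have := hc (G y); rewrite EG => h.
  by rewrite -(ler_pM2l c0) mulrA mulfV ?mul1r // gt_eqF.
have LG : L0' G.
  have h1 := L0lin (-1) _ _ (Linf_L0' _ (cinf0 _ _ LK1 LB0)) LB0.
  have h2 := L0lin 1 _ _ h1 (Linf_L0' _ (hb _ _ _ LK2 LK1 Gb)).
  have -> : G = (fun y => 1 *: ((-1) *: K1 (B0 y) + B0 y) + K1 (G (K2 y))).
    apply: functional_extensionality => y; rewrite scale1r scaleN1r [- _ + _]addrC.
    have e1 : K1 (G (K2 y)) = K1 (B0 y) - (B0 y - G y).
      by rewrite /K1 EG /K2 (TB B0) // (TB G) // GE.
    by rewrite e1 zid.
  exact: h2.
exists (fun x => G x - pi x), pi; split => //; split.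
  have h := L0lin (-1) _ _ (Linf_L0' _ Lpi) LG.
  have -> : (fun x => G x - pi x) = (fun x => (-1) *: pi x + G x).
    by apply: functional_extensionality => x; rewrite scaleN1r addrC.
  exact: h.
split => x.
  have hAG : A (G x) = E (G x) - pi (G x) by rewrite /E addrK.
  have hpG : pi (G x) = pi x by rewrite -[in RHS](EG x) piE.
  by rewrite (TB A) // (piP x).1 subr0 hAG EG hpG.
have hAx : A x = E x - pi x by rewrite /E addrK.
have hGp : G (pi x) = pi x by rewrite -{1}(Epi x) GE.
by rewrite piA subr0 hAx (TB G) // GE hGp.
Qed.

End Hil.

Theorem mainTheorem10 (R : realType) (L : GOA R) :
  fredholm_property L ->
  (* (a) *)
  (forall (g : weight L) (A : Hs g -> Hs g) (pi : Hs g -> Hs g),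
      L0 A -> is_adjoint A A -> fredholm A -> orth_proj_ker A pi -> Linf pi) ->
  (* (b) *)
  (forall (g : weight L) (R0 R1 T : Hs g -> Hs g),
      Linf R0 -> Linf R1 -> bounded_op T -> Linf (fun x => R1 (T (R0 x)))) ->
  extended_fredholm_property L.
Proof.
move=> hF ha hb; split => // g A LA sa hfr.
have [B0 par] := (hF g g A LA).2 hfr.
apply: (@core R (Hs g) (@L0 R L g g) (@Linf R L g g) _ _ _ _ _ _ _ _ A B0 LA sa par).
- by move=> X hX; apply: Linf_L0.
- by move=> X hX; apply: L0_bounded.
- by move=> X hX; apply: Linf_compact.
- by move=> a X Y hX hY; apply: L0_lin.
- by move=> a X Y hX hY; apply: Linf_lin.
- by move=> X Y hX hY; apply: comp_0inf.
- by move=> X Y hX hY; apply: comp_inf0.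
- by move=> R0 R1 T h0 h1 hT; exact: (hb g R0 R1 T h0 h1 hT).
- by move=> pi hpi; exact: (ha g A pi LA sa hfr hpi).
Qed.
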